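(* Let $D,\chi,\varepsilon>0$, $a\ge 0$, $\beta>0$, $b=D\beta^2$, and assume $\frac{a\chi}{D\varepsilon}-\beta^2\le 0$. Then there are no $\rho_0>0$, $\phi_0>0$, $r_0>0$ and functions $\rho\in C^0[0,\infty)$, $\phi\in C^2[0,\infty)$ with $\rho\ge0$, $\phi\ge 0$, such that $\rho(0)=\rho_0$, $\phi(0)=\phi_0$, $\rho>0$ on $[0,r_0)$, $\rho\equiv 0$ on $[r_0,\infty)$, $\rho$ is differentiable on $(0,r_0)$ with $\varepsilon\rho\rho_r=\chi\rho\phi_r$ there, and $D\phi_{rr}+D\frac{\phi_r}{r}+a\rho-b\phi=0$ on $(0,\infty)$.
   Context: The system $\partial_r(\frac{\varepsilon}{2}\rho^2)=\chi\rho\phi_r$, $D\phi_{rr}+D\phi_r/r+a\rho-b\phi=0$ is the radially symmetric stationary form of a hyperbolic-parabolic chemotaxis model on $\mathbb{R}^2$ with pressure $p(\rho)=\frac{\varepsilon}{2}\rho^2$; $r=|x|$. *)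

(* Defs.v *)
From Stdlib Require Import Reals.
From Coquelicot Require Import Coquelicot.
Open Scope R_scope.

Definition cont_on_halfline (f : R -> R) : Prop :=
  forall x : R, 0 <= x ->
    filterlim f (within (fun y : R => 0 <= y) (locally x)) (locally (f x)).

Definition C0_halfline (f : R -> R) : Prop := cont_on_halfline f.

Definition C2_halfline_with (f f1 f2 : R -> R) : Prop :=
  (forall x : R, 0 < x -> is_derive f x (f1 x) /\ is_derive f1 x (f2 x)) /\
  cont_on_halfline f /\ cont_on_halfline f1 /\ cont_on_halfline f2.

(* Main.v *)
Require Import Defs.
From Stdlib Require Import Reals Lra.
From Coquelicot Require Import Coquelicot.
Open Scope R_scope.

Definition ccont (g : R -> R) (a : R) := forall e, 0 < e -> exists d, 0 < d /\
  forall y, 0 <= y -> Rabs (y - a) < d -> Rabs (g y - g a) < e.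

Lemma filt_cc g a : cont_on_halfline g -> 0 <= a -> ccont g a.
Proof.
  intros H Ha e He. specialize (H a Ha).
  apply filterlim_locally with (eps := mkposreal e He) in H.
  destruct H as [d Hd]. exists d. split. apply cond_pos.
  intros y Hy Hya. apply (Hd y Hya Hy).
Qed.

Lemma cc_lin f g k a : ccont f a -> ccont g a -> ccont (fun x => f x - k * g x) a.
Proof.
  intros Hf Hg e He.
  set (K := Rabs k + 1).
  assert (HK : 0 < K) by (pose proof (Rabs_pos k); unfold K; lra).
  destruct (Hf (e/2)) as [d1 [Hd1 H1]]; [lra|].
  destruct (Hg (e/(2*K))) as [d2 [Hd2 H2]].
  { apply Rdiv_lt_0_compat; lra. }
  exists (Rmin d1 d2). split. apply Rmin_pos; lra.
  intros y Hy Hya.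
  assert (A1 := H1 y Hy (Rlt_le_trans _ _ _ Hya (Rmin_l _ _))).
  assert (A2 := H2 y Hy (Rlt_le_trans _ _ _ Hya (Rmin_r _ _))).
  assert (A' : Rabs (g y - g a) * (2*K) < e).
  { apply (Rmult_lt_compat_r (2*K)) in A2; [|lra].
    replace (e/(2*K)*(2*K)) with e in A2 by (field; lra). exact A2. }
  assert (B : Rabs k * Rabs (g y - g a) <= K * Rabs (g y - g a)).
  { apply Rmult_le_compat_r. apply Rabs_pos. unfold K; lra. }
  replace (f y - k * g y - (f a - k * g a)) with ((f y - f a) + (-k)*(g y - g a)) by ring.
  eapply Rle_lt_trans; [apply Rabs_triang|]. rewrite Rabs_mult, Rabs_Ropp. lra.
Qed.

Lemma cc_mul0 f : ccont f 0 -> ccont (fun x => x * f x) 0.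
Proof.
  intros Hf e He.
  destruct (Hf 1) as [d1 [Hd1 H1]]; [lra|].
  set (M := Rabs (f 0) + 1).
  assert (HM : 0 < M) by (pose proof (Rabs_pos (f 0)); unfold M; lra).
  exists (Rmin d1 (e/M)). split. apply Rmin_pos; [lra| apply Rdiv_lt_0_compat; lra].
  intros y Hy Hya.
  assert (A1 := H1 y Hy (Rlt_le_trans _ _ _ Hya (Rmin_l _ _))).
  assert (A2 : Rabs (y - 0) < e/M) by exact (Rlt_le_trans _ _ _ Hya (Rmin_r _ _)).
  assert (Hfy : Rabs (f y) < M).
  { pose proof (Rabs_triang_inv (f y) (f 0)). unfold M; lra. }
  replace (y * f y - 0 * f 0) with ((y - 0) * f y) by ring.
  rewrite Rabs_mult.
  apply (Rmult_lt_compat_r M) in A2; [|lra].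
  replace (e/M*M) with e in A2 by (field; lra).
  assert (Rabs (y - 0) * Rabs (f y) <= Rabs (y - 0) * M).
  { apply Rmult_le_compat_l. apply Rabs_pos. lra. }
  lra.
Qed.

Lemma incr g a b : 0 <= a < b ->
  (forall x, a < x < b -> exists d, is_derive g x d /\ 0 <= d) ->
  ccont g a -> ccont g b -> g a <= g b.
Proof.
  intros Hab Hd Ca Cb.
  assert (S1 : forall s t, a < s -> s <= t -> t < b -> g s <= g t).
  { intros s t Hs Hst Ht. destruct (Req_dec s t) as [->|Hne]; [lra|].
    destruct (MVT_gen g s t (Derive g)) as [c [Hc Hc']].
    - rewrite Rmin_left, Rmax_right; try lra. intros x Hx.
      destruct (Hd x) as [d [Hd1 _]]; [lra|].
      rewrite (is_derive_unique _ _ _ Hd1). exact Hd1.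
    - rewrite Rmin_left, Rmax_right; try lra. intros x Hx.
      destruct (Hd x) as [d [Hd1 _]]; [lra|].
      apply derivable_continuous_pt, ex_derive_Reals_0. exists d; exact Hd1.
    - rewrite Rmin_left, Rmax_right in Hc; try lra.
      destruct (Hd c) as [d [Hd1 Hd2]]; [lra|].
      rewrite (is_derive_unique _ _ _ Hd1) in Hc'.
      assert (0 <= d * (t - s)) by (apply Rmult_le_pos; lra). lra. }
  assert (S2 : forall t, a < t < b -> g a <= g t).
  { intros t Ht. destruct (Rle_or_lt (g a) (g t)) as [|Hlt]; [assumption|].
    destruct (Ca (g a - g t)) as [d [Hd0 Hdd]]; [lra|].
    set (s := a + Rmin (d/2) ((t-a)/2)).
    assert (Hm1 := Rmin_l (d/2) ((t-a)/2)). assert (Hm2 := Rmin_r (d/2) ((t-a)/2)).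
    assert (Hm0 : 0 < Rmin (d/2) ((t-a)/2)) by (apply Rmin_pos; lra).
    assert (Hs := S1 s t ltac:(unfold s; lra) ltac:(unfold s; lra) ltac:(lra)).
    assert (Hy := Hdd s ltac:(unfold s; lra)
                   ltac:(unfold s; rewrite Rabs_right; lra)).
    apply Rabs_def2 in Hy. lra. }
  destruct (Rle_or_lt (g a) (g b)) as [|Hlt]; [assumption|].
  destruct (Cb (g a - g b)) as [d [Hd0 Hdd]]; [lra|].
  set (t := b - Rmin (d/2) ((b-a)/2)).
  assert (Hm1 := Rmin_l (d/2) ((b-a)/2)). assert (Hm2 := Rmin_r (d/2) ((b-a)/2)).
  assert (Hm0 : 0 < Rmin (d/2) ((b-a)/2)) by (apply Rmin_pos; lra).
  assert (Ht := S2 t ltac:(unfold t; lra)).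
  assert (Hy := Hdd t ltac:(unfold t; lra)
                 ltac:(unfold t; rewrite Rabs_left; lra)).
  apply Rabs_def2 in Hy. lra.
Qed.

Theorem mainTheorem2 (D chi eps a beta b : R)
  (hD : 0 < D) (hchi : 0 < chi) (heps : 0 < eps) (ha : 0 <= a)
  (hbeta : 0 < beta) (hb : b = D * beta ^ 2)
  (hcond : a * chi / (D * eps) - beta ^ 2 <= 0) :
  ~ (exists (rho0 phi0 r0 : R) (rho phi phi1 phi2 : R -> R),
       0 < rho0 /\ 0 < phi0 /\ 0 < r0 /\
       C0_halfline rho /\ C2_halfline_with phi phi1 phi2 /\
       (forall r, 0 <= r -> 0 <= rho r) /\
       (forall r, 0 <= r -> 0 <= phi r) /\
       rho 0 = rho0 /\ phi 0 = phi0 /\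
       (forall r, 0 <= r < r0 -> 0 < rho r) /\
       (forall r, r0 <= r -> rho r = 0) /\
       (forall r, 0 < r < r0 ->
          exists drho, is_derive rho r drho /\
            eps * rho r * drho = chi * rho r * phi1 r) /\
       (forall r, 0 < r ->
          D * phi2 r + D * (phi1 r / r) + a * rho r - b * phi r = 0)).
Proof.
  intros [rho0 [phi0 [r0 [rho [phi [phi1 [phi2 [H0 [H1 [H2 [Hrc [[Hd [Hpc [H1c H2c]]]
    [Hrn [Hpn [Hr0 [Hp0 [Hpos [Hzero [Hder Heq]]]]]]]]]]]]]]]]]]].
  set (k := chi / eps).
  assert (Hk : 0 <= k) by (unfold k; apply Rlt_le, Rdiv_lt_0_compat; lra).
  assert (Hder' : forall x, 0 < x < r0 -> exists drho : R, is_derive rho x drho /\ drho = k * phi1 x).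
  { intros x Hx. destruct (Hder x Hx) as [dr [Hdr Hdr']]. exists dr. split; [exact Hdr|].
    assert (Hp := Hpos x ltac:(lra)).
    assert (E : eps * dr = chi * phi1 x).
    { apply Rmult_eq_reg_l with (rho x); [|lra].
      transitivity (eps * rho x * dr); [ring|]. rewrite Hdr'. ring. }
    unfold k. replace dr with ((eps * dr) / eps) by (field; lra). rewrite E. field; lra. }
  assert (Hak : a * k <= D * beta ^ 2).
  { set (q := a * k).
    assert (q / D <= beta ^ 2).
    { unfold q, k. replace (a * (chi / eps) / D) with (a * chi / (D * eps)) by (field; lra). lra. }
    replace q with (D * (q / D)) by (field; lra).
    apply Rmult_le_compat_l; lra. }
  assert (FA : forall r, 0 < r < r0 -> rho r <= k * phi r).
  { intros r Hr.
    assert (I := incr (fun x => rho x - k * phi x) r r0 ltac:(lra)).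
    simpl in I.
    assert (rho r - k * phi r <= rho r0 - k * phi r0).
    { apply I.
      - intros x Hx. destruct (Hder' x ltac:(lra)) as [dr [Hdr ->]].
        exists (k * phi1 x - k * phi1 x). split; [|lra].
        apply (is_derive_minus rho (fun x => k * phi x)); [exact Hdr|].
        apply (is_derive_scal phi). apply Hd; lra.
      - apply cc_lin; apply filt_cc; auto; lra.
      - apply cc_lin; apply filt_cc; auto; lra. }
    rewrite (Hzero r0) in H; [|lra].
    assert (0 <= k * phi r0) by (apply Rmult_le_pos; [lra| apply Hpn; lra]).
    lra. }
  assert (FB : forall t, 0 < t < r0 -> 0 <= phi1 t).
  { intros t Ht.
    assert (I := incr (fun x => x * phi1 x) 0 t ltac:(lra)). simpl in I.
    assert (0 * phi1 0 <= t * phi1 t).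
    { apply I.
      - intros x Hx. exists (1 * phi1 x + x * phi2 x). split.
        + exact (is_derive_mult (K:=R_AbsRing) (fun x => x) phi1 x 1 (phi2 x)
            (is_derive_id (K:=R_AbsRing) x) (proj2 (Hd x ltac:(lra))) Rmult_comm).
        + assert (E := Heq x ltac:(lra)).
          assert (A1 := FA x ltac:(lra)).
          assert (A2 : 0 <= phi x) by (apply Hpn; lra).
          assert (A3 : a * rho x <= b * phi x).
          { rewrite hb. assert (a * rho x <= a * (k * phi x)) by (apply Rmult_le_compat_l; lra).
            assert (a * k * phi x <= D * beta ^ 2 * phi x) by (apply Rmult_le_compat_r; lra).
            lra. }
          assert (E2 : 1 * phi1 x + x * phi2 x = x * (b * phi x - a * rho x) / D).
          { apply Rmult_eq_reg_l with D; [|lra].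
            replace (D * (x * (b * phi x - a * rho x) / D)) with (x * (b * phi x - a * rho x)) by (field; lra).
            replace (b * phi x - a * rho x) with (D * phi2 x + D * (phi1 x / x)) by lra.
            field; lra. }
          rewrite E2. apply Rmult_le_pos; [apply Rmult_le_pos; lra|].
          apply Rlt_le, Rinv_0_lt_compat; lra.
      - apply cc_mul0. apply filt_cc; auto; lra.
      - intros e He.
        destruct (filt_cc _ t H1c ltac:(lra) 1 ltac:(lra)) as [d1 [Hd1 Hdd1]].
        set (M := Rabs (phi1 t) + Rabs t + 2).
        assert (HM : 0 < M) by (pose proof (Rabs_pos (phi1 t)); pose proof (Rabs_pos t); unfold M; lra).
        destruct (filt_cc _ t H1c ltac:(lra) (e / (2 * M)) ltac:(apply Rdiv_lt_0_compat; lra)) as [d2 [Hd2 Hdd2]].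
        exists (Rmin (Rmin d1 d2) (Rmin 1 (e / (2 * M)))). split.
        { apply Rmin_pos; apply Rmin_pos; try lra. apply Rdiv_lt_0_compat; lra. }
        intros y Hy Hyt.
        assert (Hm1 := Rmin_l (Rmin d1 d2) (Rmin 1 (e / (2 * M)))).
        assert (Hm2 := Rmin_r (Rmin d1 d2) (Rmin 1 (e / (2 * M)))).
        assert (Hyt1 := Rlt_le_trans _ _ _ Hyt (Rle_trans _ _ _ Hm1 (Rmin_l _ _))).
        assert (Hyt2 := Rlt_le_trans _ _ _ Hyt (Rle_trans _ _ _ Hm1 (Rmin_r _ _))).
        assert (Hyt4 := Rlt_le_trans _ _ _ Hyt (Rle_trans _ _ _ Hm2 (Rmin_r _ _))).
        assert (B1 := Hdd1 y Hy Hyt1). assert (B2 := Hdd2 y Hy Hyt2).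
        replace (y * phi1 y - t * phi1 t) with ((y - t) * phi1 y + t * (phi1 y - phi1 t)) by ring.
        eapply Rle_lt_trans; [apply Rabs_triang|]. rewrite !Rabs_mult.
        assert (Hf : Rabs (phi1 y) <= M).
        { pose proof (Rabs_triang_inv (phi1 y) (phi1 t)). pose proof (Rabs_pos t). unfold M; lra. }
        assert (Ht' : Rabs t <= M) by (pose proof (Rabs_pos (phi1 t)); unfold M; lra).
        assert (C1 : Rabs (y - t) * Rabs (phi1 y) <= e / (2 * M) * M).
        { apply Rmult_le_compat; try apply Rabs_pos; lra. }
        assert (C2 : Rabs t * Rabs (phi1 y - phi1 t) <= M * (e / (2 * M))).
        { apply Rmult_le_compat; try apply Rabs_pos; lra. }
        assert (C3 : Rabs t * Rabs (phi1 y - phi1 t) < M * (e / (2 * M)) \/ Rabs (y - t) * Rabs (phi1 y) < e / (2 * M) * M).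
        { left. destruct (Req_dec (Rabs t) 0) as [Z|Z].
          - rewrite Z, Rmult_0_l. apply Rmult_lt_0_compat; [lra|apply Rdiv_lt_0_compat; lra].
          - apply Rmult_lt_compat_l with (r := Rabs t) in B2; [|pose proof (Rabs_pos t); lra].
            assert (Rabs t * (e / (2 * M)) <= M * (e / (2 * M))).
            { apply Rmult_le_compat_r; [apply Rlt_le, Rdiv_lt_0_compat; lra| lra]. }
            lra. }
        replace (e / (2 * M) * M) with (e / 2) in * by (field; lra).
        replace (M * (e / (2 * M))) with (e / 2) in * by (field; lra).
        lra. }
    nra. }
  assert (I := incr rho 0 r0 ltac:(lra)).
  assert (rho 0 <= rho r0).
  { apply I.
    - intros x Hx. destruct (Hder' x Hx) as [dr [Hdr ->]]. exists (k * phi1 x).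
      split; [exact Hdr|]. apply Rmult_le_pos; [lra|]. apply FB; lra.
    - apply filt_cc; auto; lra.
    - apply filt_cc; auto; lra. }
  rewrite (Hzero r0) in H; lra.
Qed.
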